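(* Let $L\in R[x][\partial]$ have order $r>0$. The set $I\subseteq R$ consisting of $0$ together with all contents of leading coefficients $\mathrm{lc}_\partial(T)$ of desingularized operators $T$ for $L$ is an ideal of $R$.
   Context: $R$ is a principal ideal domain with quotient field $Q_R$; $\sigma$ is an $R$-automorphism of $R[x]$ with $\sigma(x)=\gamma x+\tau$ ($\gamma$ a unit), $\delta$ an $R$-linear $\sigma$-derivation with $\deg\delta(x)\le1$; $R[x][\partial]$ is the Ore algebra with $\partial p=\sigma(p)\partial+\delta(p)$, inside $Q_R(x)[\partial]$. Each nonzero $f\in R[x]$ equals $cg$ with $c\in R$ (a content, unique up to units) and $g$ primitive. $\mathrm{cont}(L)=Q_R(x)[\partial]L\cap R[x][\partial]$. For $p\in R[x]$ dividing $\mathrm{lc}_\partial(L)$: $p$ is removable from $L$ at order $k$ if there are $P\in Q_R(x)[\partial]$ of order $k$ and $w,v\in R[x]$ with $\gcd(p,w)=1$ such that $PL\in R[x][\partial]$ and $\sigma^{-k}(\mathrm{lc}_\partial(PL))=\frac{w}{vp}\mathrm{lc}_\partial(L)$; non-removable if removable at no order. If $\mathrm{lc}_\partial(L)=c\,p_1^{e_1}\cdots p_m^{e_m}$ ($c\in R$, $p_i\in R[x]\setminus R$ irreducible and pairwise coprime), $T\in R[x][\partial]$ of order $k$ is desingularized for $L$ if $T\in\mathrm{cont}(L)$ and $\sigma^{r-k}(\mathrm{lc}_\partial(T))=\frac{a}{b\,p_1^{k_1}\cdots p_m^{k_m}}\mathrm{lc}_\partial(L)$ with $a,b\in R$, $b\ne0$,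 and $p_i^{d_i}$ non-removable from $L$ for all integers $d_i>k_i$. *)

(* Defs.v *)
From HB Require Import structures.
From mathcomp Require Import all_boot all_order all_algebra.
Set Implicit Arguments. Unset Strict Implicit. Unset Printing Implicit Defensive.
Import Order.TTheory GRing.Theory Num.Theory.
Local Open Scope ring_scope.

Section RingNotions.
Variable A : comUnitRingType.

Definition dvdr (a b : A) : Prop := exists c, b = c * a.

Definition is_ideal (I : A -> Prop) : Prop :=
  [/\ I 0, (forall a b, I a -> I b -> I (a + b)) & (forall c a, I a -> I (c * a))].

Definition principal_ideal_ring : Prop :=
  forall I, is_ideal I -> exists g, forall a, I a <-> dvdr g a.

Definition irreducible_elt (x : A) : Prop :=
  [/\ x != 0, x \isn't a GRing.unit &
      forall a b, x = a * b -> a \is a GRing.unit \/ b \is a GRing.unit].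

Definition coprime_elt (a b : A) : Prop :=
  forall d, dvdr d a -> dvdr d b -> d \is a GRing.unit.
End RingNotions.

Section Ore.
Variable R : idomainType.
Local Notation RX := {poly R}.
Local Notation K := {fraction {poly R}}.
Local Notation toK := (@FracField.tofrac {poly R}).

Definition primitive (g : RX) : Prop :=
  forall d : R, (forall i, dvdr d g`_i) -> d \is a GRing.unit.

Definition is_content (c : R) (f : RX) : Prop :=
  exists g, primitive g /\ f = c *: g.

Variables (gamma tau : R).
Definition sigmaP (p : RX) : RX := p \Po (gamma%:P * 'X + tau%:P).
Definition sigmaPinv (p : RX) : RX := p \Po (gamma^-1%:P * ('X - tau%:P)).
Definition sigma_int (n : int) (p : RX) : RX :=
  match n with
  | Posz m => iter m sigmaP p
  | Negz m => iter m.+1 sigmaPinv p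
  end.

(* Ore operators: sum_i Q`_i d^i is represented by the polynomial Q
   (coefficient i = coefficient of d^i); order = (size Q).-1, lc = lead_coef Q *)
Variable delta : RX -> RX.

(* d * Q  for Q in R[x][d], using d q = sigma(q) d + delta(q) *)
Definition dmul (Q : {poly RX}) : {poly RX} :=
  'X * map_poly sigmaP Q + map_poly delta Q.

Definition oreMul (P : {poly K}) (L : {poly RX}) : {poly K} :=
  \sum_(i < size P) P`_i *: map_poly toK (iter i dmul L).

Variable L : {poly RX}.

(* T in cont(L) = Q_R(x)[d] L  cap  R[x][d] *)
Definition in_cont (T : {poly RX}) : Prop :=
  exists P : {poly K}, map_poly toK T = oreMul P L.

Definition removable_at (k : nat) (p : RX) : Prop :=
  dvdr p (lead_coef L) /\
  exists (P : {poly K}) (T : {poly RX}) (w v : RX),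
    [/\ size P = k.+1, map_poly toK T = oreMul P L,
        coprime_elt p w, v != 0 &
        toK (sigma_int (- (k%:Z)) (lead_coef T))
          = toK w / (toK v * toK p) * toK (lead_coef L)].

Definition non_removable (p : RX) : Prop := ~ exists k, removable_at k p.

Definition desingularized (T : {poly RX}) : Prop :=
  T != 0 /\ in_cont T /\
  exists (c : R) (m : nat) (ps : 'I_m -> RX) (es : 'I_m -> nat),
    [/\ lead_coef L = c%:P * \prod_(i < m) ps i ^+ es i,
        (forall i, 0 < es i)%N,
        (forall i, irreducible_elt (ps i) /\ (1 < size (ps i))%N),
        (forall i j, i != j -> coprime_elt (ps i) (ps j)) &
        exists (a b : R) (ks : 'I_m -> nat),
          [/\ b != 0,
              toK (sigma_int ((size L).-1%:Z - (size T).-1%:Z) (lead_coef T))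
                = toK a%:P / (toK b%:P * toK (\prod_(i < m) ps i ^+ ks i))
                  * toK (lead_coef L) &
              forall i (d : nat), (ks i < d)%N -> non_removable (ps i ^+ d)]].
End Ore.

(* Main.v *)
Require Import Defs.
From HB Require Import structures.
From mathcomp Require Import all_boot all_order all_algebra.
From mathcomp Require Import ring zify.
From Stdlib Require Import Classical ClassicalEpsilon.
Import Order.TTheory GRing.Theory Num.Theory.
Local Open Scope ring_scope.

Set Implicit Arguments. Unset Strict Implicit. Unset Printing Implicit Defensive.


Section Dvd.
Variable A : comUnitRingType.
Implicit Types a b c : A.
Lemma dvdr_refl a : dvdr a a. Proof. by exists 1; rewrite mul1r. Qed.
Lemma dvdr_trans a b c : dvdr a b -> dvdr b c -> dvdr a c.
Proof. by move=> [x ->] [y ->]; exists (y * x); rewrite mulrA. Qed.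
Lemma dvdr0 a : dvdr a 0. Proof. by exists 0; rewrite mul0r. Qed.
Lemma dvdr_mull a b c : dvdr a b -> dvdr a (c * b).
Proof. by move=> [x ->]; exists (c * x); rewrite mulrA. Qed.
Lemma dvdr_mulr a b c : dvdr a b -> dvdr a (b * c).
Proof. by move=> H; rewrite mulrC; apply: dvdr_mull. Qed.
Lemma dvdr_mul_l a b : dvdr a (a * b).
Proof. by exists b; rewrite mulrC. Qed.
Lemma dvdr_mul_r a b : dvdr a (b * a).
Proof. by exists b. Qed.
Lemma dvdrD a b c : dvdr a b -> dvdr a c -> dvdr a (b + c).
Proof. by move=> [x ->] [y ->]; exists (x + y); rewrite mulrDl. Qed.
Lemma dvdrN a b : dvdr a b -> dvdr a (- b).
Proof. by move=> [x ->]; exists (- x); rewrite mulNr. Qed.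
Lemma dvdr_sum (I : Type) (r : seq I) (P : pred I) (F : I -> A) a :
  (forall i, P i -> dvdr a (F i)) -> dvdr a (\sum_(i <- r | P i) F i).
Proof.
move=> H; elim/big_ind: _ => //; [exact: dvdr0| exact: dvdrD].
Qed.
Lemma dvdr_unit a b : a \is a GRing.unit -> dvdr a b.
Proof. by move=> Ha; exists (b / a); rewrite divrK. Qed.
Lemma unit_dvdr a b : dvdr a b -> b \is a GRing.unit -> a \is a GRing.unit.
Proof. by move=> [x ->]; rewrite unitrM => /andP[]. Qed.
End Dvd.

Section PID.
Variable R : idomainType.
Hypothesis hPID : principal_ideal_ring R.

Definition rprime (q : R) :=
  q \isn't a GRing.unit /\ forall a b, dvdr q (a * b) -> dvdr q a \/ dvdr q b.

Definition maxdiv (x : R) :=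
  x \isn't a GRing.unit /\ forall y, dvdr y x -> y \is a GRing.unit \/ dvdr x y.

Lemma maxdiv_prime x : maxdiv x -> rprime x.
Proof.
move=> [xu xm]; split=> // a b xab.
case: (classic (dvdr x a)) => xa; first by left.
right.
pose J := fun z => exists s t, z = s * x + t * a.
have idJ : is_ideal J.
  split.
  - by exists 0, 0; rewrite !mul0r addr0.
  - move=> z1 z2 [s1 [t1 ->]] [s2 [t2 ->]]; exists (s1 + s2), (t1 + t2); ring.
  - move=> c z [s [t ->]]; exists (c * s), (c * t); ring.
have [g Hg] := hPID idJ.
have gx : dvdr g x by apply/Hg; exists 1, 0; ring.
have ga : dvdr g a by apply/Hg; exists 0, 1; ring.
case: (xm _ gx) => [gu|xg]; last by exfalso; apply: xa; apply: dvdr_trans xg ga.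
have [s [t gE]] : J g by apply/Hg; apply: dvdr_refl.
have xgb : dvdr x (g * b).
  rewrite gE mulrDl; apply: dvdrD; first by rewrite -mulrA; apply: dvdr_mull; apply: dvdr_mul_l.
  by rewrite -mulrA; apply: dvdr_mull.
have -> : b = g^-1 * (g * b) by rewrite mulrA mulVr ?mul1r.
by apply: dvdr_mull.
Qed.

Lemma exists_prime_div (e : R) : e \isn't a GRing.unit -> exists q, rprime q /\ dvdr q e.
Proof.
move=> eu; apply: NNPP => Hno.
pose P x := x \isn't a GRing.unit /\ dvdr x e.
pose Q x y := P y /\ dvdr y x /\ ~ dvdr x y.
have step : forall x, P x -> exists y, Q x y.
  move=> x [xu xe].
  have nmax : ~ maxdiv x.
    by move=> /maxdiv_prime px; apply: Hno; exists x.
  apply: NNPP => Hn; apply: nmax; split=> // y yx.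
  case: (classic (y \is a GRing.unit)) => yu; first by left.
  case: (classic (dvdr x y)) => xy; first by right.
  exfalso; apply: Hn; exists y; split; last by [].
  split; [by apply/negP | exact: dvdr_trans yx xe].
pose next x := epsilon (inhabits 0) (Q x).
have nextP x : P x -> Q x (next x).
  by move=> Px; apply: (epsilon_spec (inhabits 0) (Q x)); apply: step.
pose s n := iter n next e.
have sP n : P (s n).
  elim: n => [|n IH]; first by split=> //; apply: dvdr_refl.
  by have [] := nextP _ IH.
have sS n : Q (s n) (s n.+1) by apply: nextP.
have sD n k : dvdr (s (k + n)%N) (s n).
  elim: k => [|k IH]; first by apply: dvdr_refl.
  by apply: dvdr_trans IH; rewrite addSn; have [_ []] := sS (k + n)%N.
pose U z := exists n, dvdr (s n) z.
have idU : is_ideal U.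
  split.
  - by exists 0%N; apply: dvdr0.
  - move=> z1 z2 [n1 H1] [n2 H2]; exists (maxn n1 n2).
    apply: dvdrD.
    + apply: dvdr_trans H1; rewrite -(subnK (leq_maxl n1 n2)); apply: sD.
    + apply: dvdr_trans H2; rewrite -(subnK (leq_maxr n1 n2)); apply: sD.
  - by move=> c z [n H]; exists n; apply: dvdr_mull.
have [g Hg] := hPID idU.
have [N HN] : U g by apply/Hg; apply: dvdr_refl.
have : dvdr g (s N.+1) by apply/Hg; exists N.+1; apply: dvdr_refl.
move=> gs; have [_ [_ nd]] := sS N; apply: nd; exact: dvdr_trans HN gs.
Qed.
End PID.


Definition pb (P : Prop) : bool := if excluded_middle_informative P then true else false.
Lemma pbP (P : Prop) : reflect P (pb P).
Proof. by rewrite /pb; case: excluded_middle_informative => H; constructor. Qed.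

Section PolyContent.
Variable R : idomainType.
Hypothesis hPID : principal_ideal_ring R.
Local Notation RX := {poly R}.

Lemma scaleI_poly (a : R) (p q : RX) : a != 0 -> a *: p = a *: q -> p = q.
Proof. by move=> a0; rewrite -!mul_polyC; apply: mulfI; rewrite polyC_eq0. Qed.

Lemma coefs_dvd_scale (d : R) (h : RX) :
  (forall i, dvdr d h`_i) -> exists h', h = d *: h'.
Proof.
move=> H.
have H' i : exists c, h`_i == c * d by have [c ->] := H i; exists c.
exists (\poly_(i < size h) xchoose (H' i)).
apply/polyP=> i; rewrite coefZ coef_poly.
case: ltnP => hi; last by rewrite mulr0 nth_default.
by rewrite mulrC; apply/eqP; exact: (xchooseP (H' i)).
Qed.

Lemma primitive_neq0 (g : RX) : primitive g -> g != 0.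
Proof.
move=> pg; apply/eqP=> g0; have := pg 0; rewrite unitr0 => H.
suff : false by []; apply: H => i; rewrite g0 coef0; apply: dvdr0.
Qed.

Lemma KL (q : R) (g h : RX) : rprime q -> primitive g ->
  (forall i, dvdr q (g * h)`_i) -> forall i, dvdr q h`_i.
Proof.
move=> [qu qp] pg Hq; apply: NNPP => Hn.
have [j0 Hj0] : exists j, ~~ pb (dvdr q h`_j).
  apply: NNPP => Hn2; apply: Hn => i; apply: NNPP => Hi.
  by apply: Hn2; exists i; apply/negP => /pbP H; exact: Hi H.
have [i0 Hi0] : exists i, ~~ pb (dvdr q g`_i).
  apply: NNPP => Hn2; move/negP: (qu); apply; apply: pg => i; apply: NNPP => Hi.
  by apply: Hn2; exists i; apply/negP => /pbP H; exact: Hi H.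
have [j hj0 jmin] := ex_minnP (ex_intro (fun j => ~~ pb (dvdr q h`_j)) j0 Hj0).
have [i hi0 imin] := ex_minnP (ex_intro (fun i => ~~ pb (dvdr q g`_i)) i0 Hi0).
have hj : ~ dvdr q h`_j by move=> H; move/negP: hj0; apply; apply/pbP.
have hi : ~ dvdr q g`_i by move=> H; move/negP: hi0; apply; apply/pbP.
have low_g s : (s < i)%N -> dvdr q g`_s.
  move=> si; apply/pbP; apply: contraTT si => /imin; by rewrite -leqNgt.
have low_h s : (s < j)%N -> dvdr q h`_s.
  move=> si; apply/pbP; apply: contraTT si => /jmin; by rewrite -leqNgt.
have := Hq (i + j)%N; rewrite coefM.
have ii : (i < (i + j).+1)%N by rewrite ltnS leq_addr.
rewrite (bigD1 (Ordinal ii)) //= => Hsum.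
have Hrest : dvdr q (\sum_(k < (i + j).+1 | k != Ordinal ii) g`_k * h`_(i + j - k)).
  apply: dvdr_sum => k kne.
  case: (ltngtP k i) => ki.
  - by apply: dvdr_mulr; apply: low_g.
  - apply: dvdr_mull; apply: low_h.
    have kle : (k <= i + j)%N by rewrite -ltnS.
    by rewrite ltn_subLR // ltn_add2r.
  - by exfalso; move/eqP: kne; apply; apply: val_inj.
have : dvdr q (g`_i * h`_(i + j - i)).
  have -> : g`_i * h`_(i + j - i) =
    (g`_i * h`_(i + j - i) + \sum_(k < (i + j).+1 | k != Ordinal ii) g`_k * h`_(i + j - k))
    - \sum_(k < (i + j).+1 | k != Ordinal ii) g`_k * h`_(i + j - k) by rewrite addrK.
  by apply: dvdrD => //; apply: dvdrN.
rewrite addKn => /qp [] //.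
Qed.

Lemma GD (g : RX) (a : R) (f h : RX) : primitive g -> a != 0 ->
  a *: f = g * h -> exists h', h = a *: h'.
Proof.
move=> pg a0 E.
pose J := fun x : R => forall i, dvdr a (x * h`_i).
have idJ : is_ideal J.
  split.
  - by move=> i; rewrite mul0r; apply: dvdr0.
  - by move=> x y Hx Hy i; rewrite mulrDl; apply: dvdrD.
  - by move=> c x Hx i; rewrite -mulrA; apply: dvdr_mull.
have [e He] := hPID idJ.
have Ja : J a by move=> i; apply: dvdr_mul_l.
have ea : dvdr e a by apply/He.
have e0 : e != 0 by apply/eqP => e0; move/eqP: a0; apply; move: ea => [c ->]; rewrite e0 mulr0.
have Je : J e by apply/He; apply: dvdr_refl.
case: (boolP (e \is a GRing.unit)) => eu.
  apply: coefs_dvd_scale => i.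
  have -> : h`_i = e^-1 * (e * h`_i) by rewrite mulrA mulVr ?mul1r.
  by apply: dvdr_mull.
have [q [[qu qp] [e' ee']]] := exists_prime_div hPID eu.
have q0 : q != 0 by apply/eqP => q0; move/eqP: e0; apply; rewrite ee' q0 mulr0.
have e'0 : e' != 0 by apply/eqP => z0; move/eqP: e0; apply; rewrite ee' z0 mul0r.
exfalso.
have Je' : J e'.
  pose H2 := e' *: h.
  have [Z EZ] : exists Z, q *: H2 = a *: Z.
    apply: coefs_dvd_scale => i; rewrite /H2 !coefZ mulrA (mulrC q) -ee'; exact: Je.
  have gZ : g * Z = (q * e') *: f.
    apply: (@scaleI_poly a) => //.
    rewrite scalerAr -EZ -scalerAr /H2 -scalerAr -E !scalerA.
    by congr (_ *: _); ring.
  have qZ : forall i, dvdr q Z`_i.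
    apply: (KL (conj qu qp) pg) => i; rewrite gZ coefZ -mulrA; apply: dvdr_mul_l.
  have [W EW] := coefs_dvd_scale qZ.
  have H2W : H2 = a *: W.
    by apply: (@scaleI_poly q) => //; rewrite EZ EW !scalerA mulrC.
  move=> i; have := congr1 (fun p : RX => p`_i) H2W; rewrite /H2 !coefZ => ->.
  by apply: dvdr_mul_l.
have [t et] : dvdr e e' by apply/He.
have : e' * (1 - t * q) = 0.
  rewrite mulrBr mulr1; apply/eqP; rewrite subr_eq0; apply/eqP.
  by rewrite {1}et ee'; ring.
move/eqP; rewrite mulf_eq0 (negbTE e'0) /= subr_eq0 => /eqP tq.
by move/negP: qu; apply; apply/unitrP; exists t; rewrite -tq mulrC.
Qed.

Lemma CD (h : RX) : h != 0 -> exists c h', [/\ c != 0, primitive h' & h = c *: h'].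
Proof.
move=> h0.
pose J := fun x : R => exists u : nat -> R, x = \sum_(i < size h) u i * h`_i.
have idJ : is_ideal J.
  split.
  - by exists (fun _ => 0); rewrite big1 // => i _; rewrite mul0r.
  - move=> x y [u ->] [v ->]; exists (fun i => u i + v i); rewrite -big_split /=.
    by apply: eq_bigr => i _; rewrite mulrDl.
  - move=> c x [u ->]; exists (fun i => c * u i); rewrite mulr_sumr.
    by apply: eq_bigr => i _; rewrite mulrA.
have [c Hc] := hPID idJ.
have ch : forall i, dvdr c h`_i.
  move=> i; case: (ltnP i (size h)) => hi; last by rewrite nth_default //; apply: dvdr0.
  apply/Hc; exists (fun k => (k == i)%:R).
  rewrite (bigD1 (Ordinal hi)) //= eqxx mul1r big1 ?addr0 // => k kne.
  have -> : (k == i :> nat) = false.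
    by apply/negP => /eqP ki; move/eqP: kne; apply; apply: val_inj.
  by rewrite mul0r.
have [h' E] := coefs_dvd_scale ch.
have c0 : c != 0 by apply/eqP => c0; move/eqP: h0; apply; rewrite E c0 scale0r.
exists c, h'; split=> // d dd.
have [u cu] : J c by apply/Hc; apply: dvdr_refl.
have : dvdr (d * c) c.
  rewrite {2}cu; apply: dvdr_sum => i _; apply: dvdr_mull.
  have -> : h`_i = c * h'`_i by rewrite {1}E coefZ.
  have [t ->] := dd i; exists t; ring.
move=> [t tE].
have : c * (1 - t * d) = 0.
  rewrite mulrBr mulr1; apply/eqP; rewrite subr_eq0; apply/eqP.
  by rewrite {1}tE; ring.
move/eqP; rewrite mulf_eq0 (negbTE c0) /= subr_eq0 => /eqP td.
by apply/unitrP; exists t; split; [rewrite -td | rewrite mulrC -td].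
Qed.

Lemma primitiveM (g h : RX) : primitive g -> primitive h -> primitive (g * h).
Proof.
move=> pg ph d dd.
have [f E] := coefs_dvd_scale dd.
case: (eqVneq d 0) => [d0|d0].
  exfalso; move: E; rewrite d0 scale0r => /eqP; rewrite mulf_eq0.
  by rewrite (negbTE (primitive_neq0 pg)) (negbTE (primitive_neq0 ph)).
have [h' Eh] := GD pg d0 (esym E).
by apply: ph => i; rewrite Eh coefZ; apply: dvdr_mul_l.
Qed.

Lemma primitive1 : primitive (1 : RX).
Proof.
move=> d /(_ 0%N); rewrite coefC eqxx => H; exact: unit_dvdr H (unitr1 _).
Qed.

Lemma primitiveX (g : RX) k : primitive g -> primitive (g ^+ k).
Proof.
move=> pg; elim: k => [|k IH]; first by rewrite expr0; apply: primitive1.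
by rewrite exprS; apply: primitiveM.
Qed.

Lemma primitive_prod (I : Type) (s : seq I) (F : I -> RX) :
  (forall i, primitive (F i)) -> primitive (\prod_(i <- s) F i).
Proof.
move=> H; elim/big_ind: _ => //; [exact: primitive1 | exact: primitiveM].
Qed.

Lemma irr_primitive (p : RX) : irreducible_elt p -> (1 < size p)%N -> primitive p.
Proof.
move=> [p0 pu pirr] sp d dd.
have [p' E] := coefs_dvd_scale dd.
have := pirr d%:P p'; rewrite mul_polyC => /(_ E) [|].
  by rewrite poly_unitE size_polyC coefC eqxx => /andP[].
rewrite poly_unitE => /andP [/eqP s1 _].
exfalso; move: sp; rewrite E; have := size_scale_leq d p'; rewrite s1.
by move=> H1; rewrite ltnNge H1.
Qed.

Lemma primitive_unit_scale (u : R) (g : RX) : u \is a GRing.unit -> primitive g -> primitive (u *: g).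
Proof.
move=> uu pg d dd; apply: pg => i.
have [t tE] := dd i; exists (u^-1 * t).
move: tE; rewrite coefZ => tE.
by rewrite -mulrA -tE mulrA mulVr ?mul1r.
Qed.
End PolyContent.


Section PolyPrime.
Variable R : idomainType.
Hypothesis hPID : principal_ideal_ring R.
Local Notation RX := {poly R}.

Definition pprime (p : RX) := forall f g, dvdr p (f * g) -> dvdr p f \/ dvdr p g.

Lemma GD' (g : RX) (a : R) (f h : RX) : primitive g -> a != 0 ->
  a *: f = g * h -> exists h', h = a *: h' /\ f = g * h'.
Proof.
move=> pg a0 E; have [h' Eh] := GD hPID pg a0 E.
exists h'; split=> //; apply: (@scaleI_poly _ a) => //.
by rewrite E Eh scalerAr.
Qed.

Lemma irr_prime (p : RX) : irreducible_elt p -> (1 < size p)%N -> pprime p.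
Proof.
move=> Hirr sp f g pfg.
have pp := irr_primitive Hirr sp.
have [p0 pu pirr] := Hirr.
case: (classic (dvdr p f)) => pf; [by left | right].
pose J h := exists s t, h = s * p + t * f.
have Jp : J p by exists 1, 0; rewrite mul1r mul0r addr0.
have exn : exists n, pb (exists h, [/\ J h, h != 0 & size h = n]).
  by exists (size p); apply/pbP; exists p.
have [n /pbP [h [Jh h0 hn]] nmin] := ex_minnP exn.
have divJ : forall y, J y -> exists q, lead_coef h ^+ scalp y h *: y = q * h.
  move=> y [s [t ys]]; exists (y %/ h).
  have := Pdiv.Idomain.divp_eq y h.
  case: (eqVneq (y %% h) 0) => [-> |r0]; first by rewrite addr0.
  move=> E; exfalso.
  have Jr : J (y %% h).
    move: Jh => [s1 [t1 hE]].
    exists (lead_coef h ^+ scalp y h *: s - (y %/ h) * s1).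
    exists (lead_coef h ^+ scalp y h *: t - (y %/ h) * t1).
    have -> : y %% h = lead_coef h ^+ scalp y h *: y - (y %/ h) * h by rewrite E addrC addKr.
    rewrite ys hE; rewrite -!mul_polyC; ring.
  have := nmin (size (y %% h)); rewrite -hn => /(_ (introT (pbP _) _)).
  have lt := Pdiv.Idomain.ltn_modpN0 y h0.
  by rewrite leqNgt lt => /(_ (ex_intro _ (y %% h) (And3 Jr r0 erefl))).
have [q Eq] := divJ p Jp.
set lam := lead_coef h ^+ scalp p h in Eq.
have lam0 : lam != 0 by apply: Pdiv.Idomain.lc_expn_scalp_neq0.
have q0 : q != 0.
  apply/eqP => q0; move: Eq; rewrite q0 mul0r => /eqP.
  by rewrite scale_poly_eq0 (negbTE lam0) (negbTE p0).
have [ch [h'' [ch0 ph'' hE]]] := CD hPID h0.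
have [cq [q'' [cq0 pq'' qE]]] := CD hPID q0.
have E2 : lam *: p = (h'' * q'') * (ch * cq)%:P.
  by rewrite Eq hE qE -!mul_polyC polyCM; ring.
have [W [WE _]] := GD' (primitiveM hPID ph'' pq'') lam0 E2.
set mu := W`_0.
have chcq : ch * cq = lam * mu.
  by have := congr1 (fun r : RX => r`_0) WE; rewrite coefC eqxx coefZ.
have pE : p = (mu *: h'') * q''.
  apply: (@scaleI_poly _ lam) => //.
  by rewrite E2 -!mul_polyC chcq polyCM; ring.
case: (pirr _ _ pE) => [uh|uq].
  move: uh; rewrite poly_unitE => /andP [/eqP s1 _].
  have mu0 : mu != 0 by apply/eqP => m0; move: s1; rewrite m0 scale0r size_poly0.
  have sh : size h = 1%N by rewrite hE size_scale // -(size_scale h'' mu0).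
  have [kap kap0 hk] := size_poly1P _ (introT eqP sh).
  move: Jh => [s [t hst]].
  move: pfg => [k fgk].
  have E3 : kap *: g = p * (s * g + t * k).
    rewrite -mul_polyC -hk hst.
    have -> : (s * p + t * f) * g = s * g * p + t * (f * g) by ring.
    by rewrite fgk; ring.
  have [S [_ gS]] := GD' pp kap0 E3.
  by exists S; rewrite gS mulrC.
exfalso; apply: pf.
move: uq; rewrite poly_unitE => /andP [/eqP s1 u0].
have [u u0' qu] := size_poly1P _ (introT eqP s1).
have uU : u \is a GRing.unit by move: u0; rewrite qu coefC eqxx.
have pE2 : p = (mu * u) *: h'' by rewrite pE qu mulrC mul_polyC scalerA mulrC.
have muU : (mu * u) \is a GRing.unit.
  apply: pp => i; rewrite pE2 coefZ; apply: dvdr_mul_l.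
have hE2 : h = (ch * (mu * u)^-1) *: p by rewrite hE pE2 scalerA -mulrA mulVr ?mulr1.
have [Jf] : J f by exists 0, 1; rewrite mul0r mul1r add0r.
move=> _; have [q' Eq'] := divJ f (ex_intro _ 0 (ex_intro _ 1 (esym (etrans (congr1 (fun x => x + 1 * f) (mul0r p)) (etrans (add0r _) (mul1r f)))))).
have E4 : lead_coef h ^+ scalp f h *: f = p * (q' * (ch * (mu * u)^-1)%:P).
  by rewrite Eq' hE2 -mul_polyC; ring.
have [S [_ fS]] := GD' pp (Pdiv.Idomain.lc_expn_scalp_neq0 _ _) E4.
by exists S; rewrite fS mulrC.
Qed.
End PolyPrime.


Section PolyVal.
Variable R : idomainType.
Local Notation RX := {poly R}.

Lemma coprime_prim_const (P : RX) (a : R) : primitive P -> a != 0 -> coprime_elt P a%:P.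
Proof.
move=> pP a0 d [e Pe] [c ac].
have c0 : c != 0 by apply/eqP => c0; move: ac; rewrite c0 mul0r => /eqP; rewrite polyC_eq0 (negbTE a0).
have d0 : d != 0 by apply/eqP => d0; move: ac; rewrite d0 mulr0 => /eqP; rewrite polyC_eq0 (negbTE a0).
have sd : size d = 1%N.
  have := congr1 (fun r : RX => size r) ac; rewrite /= size_polyC a0 size_mul //.
  have := size_poly_gt0 c; have := size_poly_gt0 d; rewrite c0 d0.
  by case: (size d) => [|[|n]] //; case: (size c) => [|[|m]] //; rewrite ?addnS.
have [d0' d00 dE] := size_poly1P _ (introT eqP sd).
have du : d0' \is a GRing.unit.
  apply: pP => i; rewrite Pe dE mulrC mul_polyC coefZ; apply: dvdr_mul_l.
by rewrite poly_unitE sd dE coefC eqxx.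
Qed.

Lemma PPlemma (p : RX) n (W X Z : RX) : pprime p -> p != 0 -> ~ dvdr p Z ->
  p ^+ n * W = X * Z -> dvdr (p ^+ n) X.
Proof.
move=> pp p0 pZ; elim: n X W => [|n IH] X W.
  by rewrite expr0 => _; exists X; rewrite mulr1.
rewrite exprSr -mulrA => E.
have : dvdr p (X * Z) by rewrite -E; apply: dvdr_mull; apply: dvdr_mul_l.
move/pp => [[X1 XE]|//].
have E2 : p ^+ n * W = X1 * Z.
  apply: (mulIf p0); have -> : p ^+ n * W * p = p ^+ n * (p * W) by ring.
  rewrite E XE; ring.
have [Y YE] := IH _ _ E2.
by exists Y; rewrite XE YE; ring.
Qed.

Lemma LDstep (p X Y : RX) e : pprime p -> p != 0 ->
  dvdr X (p ^+ e.+1 * Y) -> ~ dvdr (p ^+ e.+1) X -> dvdr X (p ^+ e * Y).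
Proof.
move=> pp p0 [Z ZE] nd.
case: (classic (dvdr p Z)) => [[Z1 Z1E]|pZ].
  exists Z1; apply: (mulIf p0).
  by rewrite -mulrA (mulrC _ p) mulrA -exprSr ZE Z1E; ring.
exfalso; apply: nd; apply: (PPlemma pp p0 pZ (W := Y)).
by rewrite ZE mulrC.
Qed.

Lemma dvdr_exp (p : RX) m n : (m <= n)%N -> dvdr (p ^+ m) (p ^+ n).
Proof. by move=> mn; exists (p ^+ (n - m)); rewrite -exprD subnK. Qed.

Lemma LD (p X Y : RX) e f : pprime p -> p != 0 ->
  dvdr X (p ^+ e * Y) -> ~ dvdr (p ^+ f.+1) X -> dvdr X (p ^+ f * Y).
Proof.
move=> pp p0; elim: e => [|e IH] H nd.
  apply: dvdr_trans H _; rewrite expr0 mul1r; apply: dvdr_mull; apply: dvdr_refl.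
case: (leqP e.+1 f) => ef.
  apply: dvdr_trans H _; move: (dvdr_exp p ef) => [t tE]; exists t; rewrite tE; ring.
apply: IH => //; apply: (LDstep pp p0 H) => H2; apply: nd.
by apply: dvdr_trans H2; apply: dvdr_exp.
Qed.

Lemma LDprod m (ps : 'I_m -> RX) (es ks : 'I_m -> nat) (X : RX) :
  (forall i, pprime (ps i)) -> (forall i, ps i != 0) ->
  (forall i, ~ dvdr (ps i ^+ (ks i).+1) X) ->
  dvdr X (\prod_(i < m) ps i ^+ es i) -> dvdr X (\prod_(i < m) ps i ^+ ks i).
Proof.
move=> pp p0 nd H.
suff : forall s : seq 'I_m, dvdr X (\prod_(i < m) ps i ^+ (if i \in s then ks i else es i)).
  move/(_ (enum 'I_m)); congr dvdr; apply: eq_bigr => i _; by rewrite mem_enum.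
elim=> [|i0 s IH].
  by congr dvdr: H; apply: eq_bigr.
rewrite (bigD1 i0) //= in IH; rewrite (bigD1 i0) //= inE eqxx /=.
have := LD (pp i0) (p0 i0) IH (nd i0); congr dvdr; congr (_ * _).
apply: eq_bigr => i ii0; by rewrite inE (negbTE ii0).
Qed.
End PolyVal.


Section Sigma.
Variable R : idomainType.
Variables gamma tau : R.
Hypothesis hgamma : gamma \is a GRing.unit.
Local Notation RX := {poly R}.
Local Notation sig := (sigmaP gamma tau).
Local Notation sigi := (sigmaPinv gamma tau).
Local Notation sint := (sigma_int gamma tau).

Lemma sig0 : sig 0 = 0. Proof. exact: comp_poly0. Qed.
Lemma sigD p q : sig (p + q) = sig p + sig q. Proof. exact: comp_polyD. Qed.
Lemma sigM p q : sig (p * q) = sig p * sig q. Proof. exact: comp_polyM. Qed.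
Lemma sigC c : sig c%:P = c%:P. Proof. exact: comp_polyC. Qed.
Lemma sigZ c p : sig (c *: p) = c *: sig p. Proof. exact: comp_polyZ. Qed.
Lemma sigiM p q : sigi (p * q) = sigi p * sigi q. Proof. exact: comp_polyM. Qed.
Lemma sigiC c : sigi c%:P = c%:P. Proof. exact: comp_polyC. Qed.
Lemma sigiZ c p : sigi (c *: p) = c *: sigi p. Proof. exact: comp_polyZ. Qed.

Lemma sigK p : sigi (sig p) = p.
Proof.
rewrite /sigmaPinv /sigmaP -comp_polyA.
rewrite comp_polyD comp_polyM !comp_polyC comp_polyX.
rewrite mulrA -polyCM mulrV // mul1r addrNK; exact: comp_polyXr.
Qed.

Lemma sigiK p : sig (sigi p) = p.
Proof.
rewrite /sigmaPinv /sigmaP -comp_polyA.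
rewrite comp_polyM comp_polyB !comp_polyC comp_polyX.
by rewrite addrK mulrA -polyCM mulVr // mul1r comp_polyXr.
Qed.

Lemma sig_inj : injective sig. Proof. exact: can_inj sigK. Qed.
Lemma sigi_inj : injective sigi. Proof. exact: can_inj sigiK. Qed.

Lemma iter_morph (f : RX -> RX) n :
  (forall p q, f (p * q) = f p * f q) -> forall p q, iter n f (p * q) = iter n f p * iter n f q.
Proof. by move=> H p q; elim: n => //= n ->. Qed.
Lemma iter_C (f : RX -> RX) n : (forall c, f c%:P = c%:P) -> forall c, iter n f c%:P = c%:P.
Proof. by move=> H c; elim: n => //= n ->. Qed.
Lemma iter_Z (f : RX -> RX) n : (forall c p, f (c *: p) = c *: f p) ->
  forall c p, iter n f (c *: p) = c *: iter n f p.
Proof. by move=> H c p; elim: n => //= n ->. Qed.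
Lemma iter_inj (f : RX -> RX) n : injective f -> injective (iter n f).
Proof. by move=> H; elim: n => //= n IH p q /H /IH. Qed.

Lemma sintM n p q : sint n (p * q) = sint n p * sint n q.
Proof. by rewrite /sigma_int; case: n => n; apply: iter_morph => {}p {}q; [apply: sigM | apply: sigiM]. Qed.
Lemma sintC n c : sint n c%:P = c%:P.
Proof. by rewrite /sigma_int; case: n => n; apply: iter_C => {}c; [apply: sigC | apply: sigiC]. Qed.
Lemma sintZ n c p : sint n (c *: p) = c *: sint n p.
Proof. by rewrite /sigma_int; case: n => n; apply: iter_Z => {}c {}p; [apply: sigZ | apply: sigiZ]. Qed.
Lemma sint_inj n : injective (sint n).
Proof. by rewrite /sigma_int; case: n => n; apply: iter_inj; [apply: sig_inj | apply: sigi_inj]. Qed.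
Lemma sint_eq0 n p : (sint n p == 0) = (p == 0).
Proof.
have s0 : sint n 0 = 0 by have := sintZ n 0 0; rewrite !scale0r.
by apply/eqP/eqP => [H|->] //; apply: (@sint_inj n); rewrite H s0.
Qed.

Lemma sint_sig n p : sint n (sig p) = sint (n + 1) p.
Proof.
case: n => n.
  have -> : (Posz n + 1 = Posz n.+1)%R by lia.
  by rewrite /sigma_int iterSr.
case: n => [|n].
  have -> : (Negz 0 + 1 = Posz 0)%R by rewrite NegzE; lia.
  by rewrite /sigma_int iterSr sigK.
have -> : (Negz n.+1 + 1 = Negz n)%R by rewrite !NegzE; lia.
by rewrite /sigma_int iterSr sigK.
Qed.

Lemma sint_iter n j p : sint n (iter j sig p) = sint (n + j%:Z) p.
Proof.
elim: j n => [|j IH] n /=; first by rewrite addr0.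
rewrite sint_sig IH; congr sigma_int; lia.
Qed.

Lemma sig_primitive p : primitive p -> primitive (sig p).
Proof.
move=> pp d dd; have [h E] := coefs_dvd_scale dd.
apply: pp => i; have : p = d *: sigi h by rewrite -sigiZ -E sigK.
by move=> ->; rewrite coefZ; apply: dvdr_mul_l.
Qed.
End Sigma.


Section Dmul.
Variable R : idomainType.
Variables gamma tau : R.
Hypothesis hgamma : gamma \is a GRing.unit.
Variable delta : {poly R} -> {poly R}.
Hypothesis delta_add : forall p q, delta (p + q) = delta p + delta q.
Hypothesis delta_leib : forall p q, delta (p * q) = sigmaP gamma tau p * delta q + delta p * q.
Local Notation RX := {poly R}.
Local Notation sig := (sigmaP gamma tau).
Local Notation dm := (dmul gamma tau delta).

Lemma delta0 : delta 0 = 0.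
Proof. by have := delta_add 0 0; rewrite addr0 => /eqP; rewrite addrC -subr_eq subrr eq_sym => /eqP. Qed.

Lemma map_polyD_gen (f : RX -> RX) (P Q : {poly RX}) : f 0 = 0 ->
  (forall p q, f (p + q) = f p + f q) -> map_poly f (P + Q) = map_poly f P + map_poly f Q.
Proof. by move=> f0 fD; apply/polyP => i; rewrite coefD !coef_map_id0 // coefD fD. Qed.

Lemma dmul0 : dm 0 = 0.
Proof. by rewrite /dmul !map_poly0 mulr0 addr0. Qed.

Lemma dmulD P Q : dm (P + Q) = dm P + dm Q.
Proof.
rewrite /dmul (map_polyD_gen _ _ (sig0 _ _) (sigD _ _)) (map_polyD_gen _ _ delta0 delta_add).
by rewrite mulrDr; ring.
Qed.

Lemma dmulZ (f : RX) (Q : {poly RX}) : dm (f *: Q) = sig f *: dm Q + delta f *: Q.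
Proof.
rewrite /dmul.
have -> : map_poly sig (f *: Q) = sig f *: map_poly sig Q.
  by apply/polyP => i; rewrite coefZ !coef_map_id0 ?sig0 // coefZ sigM.
have -> : map_poly delta (f *: Q) = sig f *: map_poly delta Q + delta f *: Q.
  by apply/polyP => i; rewrite coefD !coefZ !coef_map_id0 ?delta0 // coefZ delta_leib.
by rewrite scalerDr scalerAr addrA.
Qed.

Lemma dmul_sum (I : Type) (s : seq I) (F : I -> {poly RX}) :
  dm (\sum_(i <- s) F i) = \sum_(i <- s) dm (F i).
Proof. by apply: (big_morph _ dmulD dmul0). Qed.

Lemma sig_eq0 p : (sig p == 0) = (p == 0).
Proof.
apply/eqP/eqP => [H|->]; last exact: sig0.
by rewrite -(sigK tau hgamma p) H /sigmaPinv comp_poly0.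
Qed.

Lemma size_dmul Q : Q != 0 -> size (dm Q) = (size Q).+1 /\ lead_coef (dm Q) = sig (lead_coef Q).
Proof.
move=> Q0.
have lc0 : sig (lead_coef Q) != 0 by rewrite sig_eq0 lead_coef_eq0.
have sm : size (map_poly sig Q) = size Q by apply: size_map_poly_id0.
have lm : lead_coef (map_poly sig Q) = sig (lead_coef Q) by apply: lead_coef_map_id0 => //; apply: sig0.
have m0 : map_poly sig Q != 0 by rewrite -size_poly_eq0 sm size_poly_eq0.
have s1 : size ('X * map_poly sig Q) = (size Q).+1 by rewrite mulrC size_mulX // sm.
have s2 : (size (map_poly delta Q) < (size Q).+1)%N.
  by rewrite ltnS /map_poly; apply: size_poly.
rewrite /dmul; split; first by rewrite size_addl s1.
by rewrite lead_coefDl ?s1 // mulrC lead_coefMX.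
Qed.

Variable L : {poly RX}.
Variable r : nat.
Hypothesis hL : size L = r.+1.

Lemma size_iter_dmul i : size (iter i dm L) = (r.+1 + i)%N /\
  lead_coef (iter i dm L) = iter i sig (lead_coef L).
Proof.
elim: i => [|i [IH1 IH2]]; first by rewrite addn0.
have n0 : iter i dm L != 0 by rewrite -size_poly_eq0 IH1 addSn.
have [h1 h2] := size_dmul n0.
by rewrite /= h1 h2 IH1 IH2 addnS.
Qed.
End Dmul.


Lemma frac_repr (A : idomainType) (x : {fraction A}) :
  exists n d, d != 0 /\ x * (FracField.tofrac d) = (FracField.tofrac n).
Proof.
elim/quotW: x => r.
exists (r.1), (r.2); split; first exact: denom_ratioP.
rewrite /FracField.tofrac; unlock.
rewrite -[_ * _]/(FracField.mul _ _).
rewrite -FracField.pi_mul.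
apply/eqmodP; rewrite /= FracField.equivfE /FracField.mulf.
have d0 := denom_ratioP r.
rewrite !numden_Ratio ?oner_neq0 ?mulf_neq0 //.
1: by rewrite mulr1 mulr1 mulrC. all: exact: oner_neq0.
Qed.

Section OreK.
Variable R : idomainType.
Variables gamma tau : R.
Hypothesis hgamma : gamma \is a GRing.unit.
Variable delta : {poly R} -> {poly R}.
Hypothesis delta_add : forall p q, delta (p + q) = delta p + delta q.
Hypothesis delta_leib : forall p q, delta (p * q) = sigmaP gamma tau p * delta q + delta p * q.
Local Notation RX := {poly R}.
Local Notation sig := (sigmaP gamma tau).
Local Notation dm := (dmul gamma tau delta).
Local Notation K := {fraction RX}.
Local Notation toK := (@FracField.tofrac RX).
Local Notation mapK := (map_poly toK).
Variable L : {poly RX}.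
Variable r : nat.
Hypothesis hL : size L = r.+1.
Local Notation oM := (oreMul gamma tau delta).
Local Notation M i := (mapK (iter i dm L)).

Lemma toK_inj : injective toK.
Proof. by move=> x y /eqP; rewrite tofrac_eq => /eqP. Qed.
Lemma mapK_inj : injective mapK.
Proof. by apply: map_inj_poly; [apply: toK_inj | apply: rmorph0]. Qed.
Lemma mapKZ (f : RX) (Q : {poly RX}) : mapK (f *: Q) = toK f *: mapK Q.
Proof. exact: map_polyZ. Qed.
Lemma size_mapK (Q : {poly RX}) : size (mapK Q) = size Q.
Proof. by apply: size_map_inj_poly; [apply: toK_inj | apply: rmorph0]. Qed.

Lemma oreMul_widen n (P : {poly K}) : (size P <= n)%N ->
  oM P L = \sum_(i < n) P`_i *: M i.
Proof.
move=> Pn; rewrite /oreMul (big_ord_widen _ (fun i => P`_i *: M i) Pn) big_mkcond /=.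
apply: eq_bigr => i _; case: ltnP => // Pi.
by rewrite nth_default // scale0r.
Qed.

Definition inImg (X : {poly K}) := exists P, X = oM P L.

Lemma inImg0 : inImg 0.
Proof. by exists 0; rewrite /oreMul size_poly0 big_ord0. Qed.

Lemma inImgD X Y : inImg X -> inImg Y -> inImg (X + Y).
Proof.
move=> [P ->] [Q ->]; exists (P + Q).
rewrite (oreMul_widen (leq_maxl (size P) (size Q))).
rewrite (oreMul_widen (leq_maxr (size P) (size Q))).
rewrite (oreMul_widen (size_add P Q)) -big_split /=.
by apply: eq_bigr => i _; rewrite coefD scalerDl.
Qed.

Lemma inImgZ (c : K) X : inImg X -> inImg (c *: X).
Proof.
move=> [P ->]; exists (c *: P).
rewrite (oreMul_widen (size_scale_leq c P)) /oreMul scaler_sumr.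
by apply: eq_bigr => i _; rewrite coefZ scalerA.
Qed.

Lemma inImgM i : inImg (M i).
Proof.
exists 'X^i; rewrite (oreMul_widen (n := i.+1)) ?size_polyXn //.
rewrite (bigD1 (Ordinal (ltnSn i))) //= coefXn eqxx scale1r big1 ?addr0 // => j ji.
rewrite coefXn; have -> : (j == i :> nat) = false.
  by apply/negP => /eqP H; move/eqP: ji; apply; apply: val_inj.
by rewrite scale0r.
Qed.

Lemma inImg_sum (I : Type) (s : seq I) (F : I -> {poly K}) :
  (forall i, inImg (F i)) -> inImg (\sum_(i <- s) F i).
Proof. move=> H; elim/big_ind: _ => //; [exact: inImg0 | exact: inImgD]. Qed.

Lemma clear_den (P : {poly K}) : exists q : RX, q != 0 /\ exists Pt : {poly RX}, mapK Pt = toK q *: P.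
Proof.
elim/poly_ind: P => [|P c [q1 [q10 [Pt1 E1]]]].
  by exists 1; split; [apply: oner_neq0 | exists 0; rewrite rmorph0 scaler0].
have [n [d [d0 cE]]] := frac_repr c.
exists (q1 * d); split; first by rewrite mulf_neq0.
exists (d *: (Pt1 * 'X) + (q1 * n)%:P).
rewrite rmorphD /= mapKZ rmorphM /= map_polyX E1 map_polyC /=.
rewrite scalerDr -scalerAl scalerA scale_polyC.
have -> : toK d * toK q1 = toK (q1 * d) by rewrite mulrC rmorphM.
have -> : toK (q1 * n) = toK (q1 * d) * c by rewrite !rmorphM /= -cE; ring.
by [].
Qed.
Lemma oMZ (c : K) P : oM (c *: P) L = c *: oM P L.
Proof.
rewrite (oreMul_widen (size_scale_leq c P)) /oreMul scaler_sumr.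
by apply: eq_bigr => i _; rewrite coefZ scalerA.
Qed.

Lemma oM_mapK (Pt : {poly RX}) :
  oM (mapK Pt) L = mapK (\sum_(i < size Pt) Pt`_i *: iter i dm L).
Proof.
rewrite (oreMul_widen (n := size Pt)) ?size_mapK // rmorph_sum /=.
by apply: eq_bigr => i _; rewrite mapKZ coef_map_id0 ?rmorph0.
Qed.

Lemma inImg_dmul (T : {poly RX}) : inImg (mapK T) -> inImg (mapK (dm T)).
Proof.
move=> [P PE].
have [q [q0 [Pt PtE]]] := clear_den P.
have E1 : q *: T = \sum_(i < size Pt) Pt`_i *: iter i dm L.
  by apply: mapK_inj; rewrite mapKZ PE -oMZ -PtE oM_mapK.
have E2 : sig q *: dm T = \sum_(i < size Pt) (sig Pt`_i *: iter i.+1 dm L + delta Pt`_i *: iter i dm L)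
                          - delta q *: T.
  have H := congr1 dm E1; rewrite (dmulZ delta_add delta_leib) (dmul_sum _ _ delta_add) in H.
  rewrite -[sig q *: dm T](addrK (delta q *: T)) H; congr (_ - _).
  by apply: eq_bigr => i _; rewrite (dmulZ delta_add delta_leib).
have sq0 : toK (sig q) != 0 by rewrite tofrac_eq0 sig_eq0.
have E3 : mapK (dm T) = (toK (sig q))^-1 *: mapK (sig q *: dm T).
  by rewrite mapKZ scalerA mulVf // scale1r.
rewrite E3.
apply: inImgZ; rewrite E2 rmorphB /= rmorph_sum /=.
apply: inImgD.
  apply: inImg_sum => i; rewrite rmorphD /= !mapKZ.
  by apply: inImgD; apply: inImgZ; [apply: (inImgM i.+1) | apply: inImgM].
rewrite -scaleN1r; apply: inImgZ; rewrite mapKZ; apply: inImgZ; rewrite PE; by exists P.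
Qed.

Lemma oM_size (P : {poly K}) : P != 0 -> size (oM P L) = (size P + r)%N.
Proof.
move=> P0.
have sP : (0 < size P)%N by rewrite size_poly_gt0.
have sM i : size (M i) = (r.+1 + i)%N.
  by rewrite size_mapK; have [-> _] := size_iter_dmul tau hgamma delta hL i.
rewrite /oreMul; move: P0 sP; case E: (size P) => [|n] //= P0 _.
have ln0 : P`_n != 0 by move: P0; rewrite -lead_coef_eq0 lead_coefE E.
rewrite big_ord_recr /= addrC size_addl; rewrite size_scale // sM.
  by rewrite !addSn addnC.
rewrite addSn ltnS; apply: (leq_trans (size_sum _ _ _)).
apply/bigmax_leqP => i _; apply: (leq_trans (size_scale_leq _ _)).
by rewrite sM addSn ltn_add2l; apply: ltn_ord.
Qed.
End OreK.


Section Main1.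
Variable R : idomainType.
Hypothesis hPID : principal_ideal_ring R.
Variables gamma tau : R.
Hypothesis hgamma : gamma \is a GRing.unit.
Variable delta : {poly R} -> {poly R}.
Hypothesis delta_add : forall p q, delta (p + q) = delta p + delta q.
Hypothesis delta_leib : forall p q, delta (p * q) = sigmaP gamma tau p * delta q + delta p * q.
Local Notation RX := {poly R}.
Local Notation sig := (sigmaP gamma tau).
Local Notation sint := (sigma_int gamma tau).
Local Notation dm := (dmul gamma tau delta).
Local Notation K := {fraction RX}.
Local Notation toK := (@FracField.tofrac RX).
Local Notation mapK := (map_poly toK).
Variable L : {poly RX}.
Variable r : nat.
Hypothesis hL : size L = r.+1.
Local Notation oM := (oreMul gamma tau delta).

Lemma lcL0 : lead_coef L != 0.
Proof. by rewrite lead_coef_eq0 -size_poly_eq0 hL. Qed.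

Lemma R2K (X A B Pi l : RX) : B != 0 -> Pi != 0 -> X * (B * Pi) = A * l ->
  toK X = toK A / (toK B * toK Pi) * toK l.
Proof.
move=> B0 Pi0 E.
have BP0 : toK (B * Pi) != 0 by rewrite tofrac_eq0 mulf_neq0.
have -> : toK B * toK Pi = toK (B * Pi) by rewrite rmorphM.
rewrite mulrAC -[toK A * toK l]rmorphM -E rmorphM /= mulfK //.
Qed.

Lemma K2R (X A B Pi l : RX) : B != 0 -> Pi != 0 ->
  toK X = toK A / (toK B * toK Pi) * toK l -> X * (B * Pi) = A * l.
Proof.
move=> B0 Pi0 E; apply: toK_inj.
rewrite !rmorphM /= E mulrAC divfK //.
by rewrite mulf_neq0 // tofrac_eq0.
Qed.

Lemma oM0 : oM 0 L = 0.
Proof. by rewrite /oreMul size_poly0 big_ord0. Qed.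

Lemma cont_size (T : {poly RX}) (P : {poly K}) : T != 0 -> mapK T = oM P L ->
  P != 0 /\ size T = (size P + r)%N.
Proof.
move=> T0 PE.
have P0 : P != 0.
  apply/eqP => P0; move: PE; rewrite P0 oM0 => /eqP; rewrite -size_poly_eq0 size_mapK.
  by rewrite size_poly_eq0 (negbTE T0).
split=> //; rewrite -(size_mapK T) PE; exact: (oM_size tau hgamma delta hL).
Qed.

Lemma DIV (c : R) m (ps : 'I_m -> RX) (es ks : 'I_m -> nat) (TB : {poly RX}) (aB bB : R) (PiB : RX) :
  lead_coef L = c%:P * \prod_(i < m) ps i ^+ es i ->
  (forall i, irreducible_elt (ps i) /\ (1 < size (ps i))%N) ->
  (forall i (d : nat), (ks i < d)%N -> non_removable gamma tau delta L (ps i ^+ d)) ->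
  TB != 0 -> in_cont gamma tau delta L TB -> bB != 0 -> primitive PiB ->
  sint ((size L).-1%:Z - (size TB).-1%:Z) (lead_coef TB) * (bB%:P * PiB) = aB%:P * lead_coef L ->
  dvdr PiB (\prod_(i < m) ps i ^+ ks i).
Proof.
move=> lcE psirr nonrem TB0 [PB PBE] bB0 pPi Hrel.
have [PB0 sTB] := cont_size TB0 PBE.
have sPB : (0 < size PB)%N by rewrite size_poly_gt0.
set j := (size PB).-1.
have nE : (size L).-1%:Z - (size TB).-1%:Z = - (j%:Z).
  rewrite hL sTB /j; move: sPB; case: (size PB) => [|k] //= _.
  lia.
rewrite nE in Hrel.
have Pi0 : PiB != 0 by apply: primitive_neq0.
have lTB0 : lead_coef TB != 0 by rewrite lead_coef_eq0.
have aB0 : aB != 0.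
  apply/eqP => a0; move: Hrel; rewrite a0 mul0r => /eqP.
  by rewrite mulf_eq0 sint_eq0 // (negbTE lTB0) mulf_eq0 polyC_eq0 (negbTE bB0) (negbTE Pi0).
have [h1 [_ lE]] : exists h1, h1 = h1 /\ lead_coef L = PiB * h1.
  have E : aB *: lead_coef L = PiB * (sint (- j%:Z) (lead_coef TB) * bB%:P).
    by rewrite -mul_polyC -Hrel; ring.
  by have [h [_ ->]] := GD' hPID pPi aB0 E; exists h.
have c0 : c != 0.
  by apply/eqP => c0; move: lcL0; rewrite lcE c0 mul0r eqxx.
have [h2 [_ pE]] : exists h2, h2 = h2 /\ \prod_(i < m) ps i ^+ es i = PiB * h2.
  have E : c *: \prod_(i < m) ps i ^+ es i = PiB * h1 by rewrite -mul_polyC -lcE lE.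
  by have [h [_ ->]] := GD' hPID pPi c0 E; exists h.
have nd : forall i, ~ dvdr (ps i ^+ (ks i).+1) PiB.
  move=> i [Q QE]; apply: (nonrem i (ks i).+1 (ltnSn _)); exists j; split.
    by exists (Q * h1); rewrite lE QE; ring.
  have [pirr psz] := psirr i.
  have Q0 : Q != 0 by apply/eqP => Q0; move: Pi0; rewrite QE Q0 mul0r eqxx.
  exists PB, TB, aB%:P, (bB%:P * Q); split => //.
  - by rewrite /j prednK.
  - apply: coprime_prim_const aB0; apply: primitiveX => //; exact: irr_primitive.
  - by rewrite mulf_neq0 // polyC_eq0.
  - apply: R2K; first by rewrite mulf_neq0 // polyC_eq0.
      by rewrite expf_neq0 //; case: pirr.
    by rewrite -mulrA -QE.
apply: (LDprod (es := es)).
- by move=> i; have [H1 H2] := psirr i; apply: irr_prime.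
- by move=> i; have [[H1 _ _] _] := psirr i.
- exact: nd.
- by exists h2; rewrite pE mulrC.
Qed.
End Main1.


Lemma lead_add_same (A : idomainType) (P Q : {poly A}) n :
  size P = n.+1 -> (size Q <= n.+1)%N -> P`_n + Q`_n != 0 ->
  size (P + Q) = n.+1 /\ lead_coef (P + Q) = P`_n + Q`_n.
Proof.
move=> sP sQ nz.
have le : (size (P + Q)%R <= n.+1)%N.
  by apply: (leq_trans (size_add _ _)); rewrite geq_max sP leqnn sQ.
have ge : (n.+1 <= size (P + Q)%R)%N.
  rewrite ltnNge; apply/negP => H; move/negP: nz; apply.
  by rewrite -coefD nth_default.
have sz : size (P + Q) = n.+1 by apply/eqP; rewrite eqn_leq le ge.
by split=> //; rewrite lead_coefE sz coefD.
Qed.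

Section Main2.
Variable R : idomainType.
Hypothesis hPID : principal_ideal_ring R.
Variables gamma tau : R.
Hypothesis hgamma : gamma \is a GRing.unit.
Variable delta : {poly R} -> {poly R}.
Hypothesis delta_add : forall p q, delta (p + q) = delta p + delta q.
Hypothesis delta_leib : forall p q, delta (p * q) = sigmaP gamma tau p * delta q + delta p * q.
Local Notation RX := {poly R}.
Local Notation sig := (sigmaP gamma tau).
Local Notation sint := (sigma_int gamma tau).
Local Notation dm := (dmul gamma tau delta).
Local Notation K := {fraction RX}.
Local Notation toK := (@FracField.tofrac RX).
Local Notation mapK := (map_poly toK).
Variable L : {poly RX}.
Variable r : nat.
Hypothesis hL : size L = r.+1.
Local Notation oM := (oreMul gamma tau delta).
Local Notation des := (desingularized gamma tau delta L).

Lemma des_scale (c : R) T x : c != 0 -> des T -> is_content x (lead_coef T) ->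
  des (c%:P *: T) /\ is_content (c * x) (lead_coef (c%:P *: T)).
Proof.
move=> c0 [T0 [[P PE] [cc [m [ps [es [lE esp irr cop [a [b [ks [b0 eqn nonrem]]]]]]]]]]] [g [pg gE]].
have cP0 : c%:P != 0 by rewrite polyC_eq0.
split; last by exists g; split=> //; rewrite lead_coefZ gE mul_polyC scalerA.
split; first by rewrite scale_poly_eq0 negb_or cP0 T0.
split; first by exists (toK c%:P *: P); rewrite mapKZ PE oMZ.
exists cc, m, ps, es; split=> //; exists (c * a), b, ks; split => //.
rewrite lead_coefZ size_scale // sintM sintC rmorphM /= eqn polyCM rmorphM /=.
by rewrite !mulrA.
Qed.

Lemma des_dmul T x : des T -> is_content x (lead_coef T) ->
  [/\ des (dm T), is_content x (lead_coef (dm T)) & size (dm T) = (size T).+1].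
Proof.
move=> [T0 [C [cc [m [ps [es [lE esp irr cop [a [b [ks [b0 eqn nonrem]]]]]]]]]]] [g [pg gE]].
have [sz lc] := size_dmul tau hgamma delta T0.
have sT : (0 < size T)%N by rewrite size_poly_gt0.
split=> //.
- split; first by rewrite -size_poly_eq0 sz.
  split; first by apply: (inImg_dmul hgamma delta_add delta_leib).
  exists cc, m, ps, es; split=> //; exists a, b, ks; split => //.
  rewrite lc sint_sig // sz -eqn; congr (toK (sint _ _)).
  move: sT; case: (size T) => [|k] //= _; lia.
- by exists (sig g); split; [apply: sig_primitive | rewrite lc gE sigZ].
Qed.

Lemma des_iter j T x : des T -> is_content x (lead_coef T) ->
  [/\ des (iter j dm T), is_content x (lead_coef (iter j dm T)) & size (iter j dm T) = (size T + j)%N].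
Proof.
move=> dT cT; elim: j => [|j [d1 c1 s1]]; first by rewrite addn0.
have [d2 c2 s2] := des_dmul d1 c1.
by split=> //=; rewrite s2 s1 addnS.
Qed.
End Main2.


Section Main3.
Variable R : idomainType.
Hypothesis hPID : principal_ideal_ring R.
Variables gamma tau : R.
Hypothesis hgamma : gamma \is a GRing.unit.
Variable delta : {poly R} -> {poly R}.
Hypothesis delta_add : forall p q, delta (p + q) = delta p + delta q.
Hypothesis delta_leib : forall p q, delta (p * q) = sigmaP gamma tau p * delta q + delta p * q.
Local Notation RX := {poly R}.
Local Notation sig := (sigmaP gamma tau).
Local Notation sint := (sigma_int gamma tau).
Local Notation dm := (dmul gamma tau delta).
Local Notation K := {fraction RX}.
Local Notation toK := (@FracField.tofrac RX).
Local Notation mapK := (map_poly toK).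
Variable L : {poly RX}.
Variable r : nat.
Hypothesis hL : size L = r.+1.
Local Notation oM := (oreMul gamma tau delta).
Local Notation des := (desingularized gamma tau delta L).
Local Notation Iset := (fun c : R => c = 0 \/ exists T, des T /\ is_content c (lead_coef T)).

Lemma Pi_prim m (ps : 'I_m -> RX) (ks : 'I_m -> nat) :
  (forall i, irreducible_elt (ps i) /\ (1 < size (ps i))%N) -> primitive (\prod_(i < m) ps i ^+ ks i).
Proof.
move=> irr; apply: primitive_prod => // i; have [H1 H2] := irr i.
by apply: primitiveX => //; apply: irr_primitive.
Qed.

Lemma add_same T1 T2 x1 x2 : des T1 -> des T2 -> is_content x1 (lead_coef T1) ->
  is_content x2 (lead_coef T2) -> size T1 = size T2 -> Iset (x1 + x2).
Proof.
move=> D1 D2 [g1 [pg1 g1E]] [g2 [pg2 g2E]] sz.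
have D1' := D1; have D2' := D2.
move: D1' D2' => [T10 [C1 [c [m [ps [es [lE esp irr cop [a1 [b1 [ks [b10 eq1 nr1]]]]]]]]]]].
move=> [T20 [C2 [c' [m' [ps' [es' [lE' esp' irr' cop' [a2 [b2 [ks' [b20 eq2 nr2]]]]]]]]]]].
set n := ((size L).-1)%:Z - ((size T1).-1)%:Z.
rewrite -sz -/n in eq2.
set Pi1 := \prod_(i < m) ps i ^+ ks i.
set Pi2 := \prod_(i < m') ps' i ^+ ks' i.
have pP1 : primitive Pi1 by apply: Pi_prim.
have pP2 : primitive Pi2 by apply: Pi_prim.
have P10 : Pi1 != 0 by apply: primitive_neq0.
have P20 : Pi2 != 0 by apply: primitive_neq0.
have b1P : b1%:P != 0 by rewrite polyC_eq0.
have b2P : b2%:P != 0 by rewrite polyC_eq0.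
have rel1 := K2R b1P P10 eq1.
have rel2 := K2R b2P P20 eq2.
have d21 : dvdr Pi2 Pi1.
  apply: (DIV hPID hgamma hL lE irr nr1 T20 C2 b20 pP2); rewrite -sz; exact: rel2.
have d12 : dvdr Pi1 Pi2 by apply: (DIV hPID hgamma hL lE' irr' nr2 T10 C1 b10 pP1); exact: rel1.
move: d21 d12 => [s sE] [t tE].
have st1 : s * t = 1.
  apply: (mulIf P10); rewrite mul1r -mulrA -tE -sE //.
have sU : s \is a GRing.unit by apply/unitrP; exists t; split=> //; rewrite mulrC.
move: (sU); rewrite poly_unitE => /andP [/eqP s1 s0U].
have sC : s = (s`_0)%:P by apply: size1_polyC; rewrite s1.
set s0 := s`_0 in sC s0U.
have lT10 : lead_coef T1 != 0 by rewrite lead_coef_eq0.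
have lT20 : lead_coef T2 != 0 by rewrite lead_coef_eq0.
have a10 : a1 != 0.
  apply/eqP => a0; move: rel1; rewrite a0 mul0r => /eqP.
  by rewrite mulf_eq0 sint_eq0 // (negbTE lT10) mulf_eq0 (negbTE b1P) (negbTE P10).
have a20 : a2 != 0.
  apply/eqP => a0; move: rel2; rewrite a0 mul0r => /eqP.
  by rewrite mulf_eq0 sint_eq0 // (negbTE lT20) mulf_eq0 (negbTE b2P) (negbTE P20).
have s00 : s0 != 0 by apply/eqP => z; move: s0U; rewrite z unitr0.
have E : lead_coef T1 * (b1 * s0 * a2)%:P = lead_coef T2 * (b2 * a1)%:P.
  apply: (@sint_inj _ _ tau hgamma n); apply: (mulIf P20); rewrite !sintM !sintC.
  have r1 : sint n (lead_coef T1) * (b1 * s0 * a2)%:P * Pi2 = a1%:P * lead_coef L * a2%:P.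
    by rewrite -rel1 sE sC !polyCM; ring.
  have r2 : sint n (lead_coef T2) * (b2 * a1)%:P * Pi2 = a2%:P * lead_coef L * a1%:P.
    by rewrite -rel2 !polyCM; ring.
  by rewrite r1 r2; ring.
have x10 : x1 != 0.
  by apply/eqP => z; move: lT10; rewrite g1E z scale0r eqxx.
have al0 : x1 * (b1 * s0 * a2) != 0 by rewrite !mulf_neq0.
have E2 : (x1 * (b1 * s0 * a2)) *: g1 = g2 * (x2 * (b2 * a1))%:P.
  have -> : (x1 * (b1 * s0 * a2)) *: g1 = lead_coef T1 * (b1 * s0 * a2)%:P.
    by rewrite g1E -!mul_polyC polyCM; ring.
  have -> : g2 * (x2 * (b2 * a1))%:P = lead_coef T2 * (b2 * a1)%:P.
    by rewrite g2E -!mul_polyC polyCM; ring.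
  exact: E.
have [h' [h'E g1h]] := GD' hPID pg2 al0 E2.
have sh : (size h' <= 1)%N.
  have := congr1 (fun p : RX => size p) h'E; rewrite /= size_scale // => <-.
  exact: size_polyC_leq1.
set u := h'`_0.
have g1u : g1 = u *: g2 by rewrite g1h {1}(size1_polyC sh) mulrC mul_polyC.
have uU : u \is a GRing.unit by apply: pg1 => i; rewrite g1u coefZ; apply: dvdr_mul_l.
case: (eqVneq (x1 + x2) 0) => [->|x120]; first by left.
right.
set T := T1 + u%:P *: T2.
have g10 : g1 != 0 by apply: primitive_neq0.
have sT1 : size T1 = (size T1).-1.+1 by rewrite prednK // size_poly_gt0.
have cT : T1`_(size T1).-1 + (u%:P *: T2)`_(size T1).-1 = (x1 + x2) *: g1.
  rewrite coefZ -lead_coefE sz -lead_coefE g1E g2E g1u mul_polyC !scalerA -scalerDl.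
  by congr (_ *: _); ring.
have [sT lT] : size T = (size T1).-1.+1 /\ lead_coef T = (x1 + x2) *: g1.
  rewrite -cT; apply: lead_add_same => //.
    by rewrite -sT1 (leq_trans (size_scale_leq _ _)) // sz.
  by rewrite cT scale_poly_eq0 negb_or x120 g10.
exists T; split; last by exists g1; split.
split; first by rewrite -size_poly_eq0 sT.
split.
  move: C1 C2 => [P1 P1E] [P2 P2E].
  have : inImg gamma tau delta L (mapK T).
    rewrite rmorphD /= mapKZ; apply: inImgD; first by exists P1.
    by apply: inImgZ; exists P2.
  by move=> [P PE]; exists P.
exists c, m, ps, es; split=> //; exists ((x1 + x2) * a1), (x1 * b1), ks; split => //.
  by rewrite mulf_neq0.
rewrite lT sT; change (toK (sint n ((x1 + x2) *: g1)) = toK ((x1 + x2) * a1)%:P / (toK (x1 * b1)%:P * toK Pi1) * toK (lead_coef L)).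
have xb : (x1 * b1)%:P != 0 by rewrite polyC_eq0 mulf_neq0.
apply: R2K => //.
have rel1' := rel1; rewrite g1E sintZ -mul_polyC in rel1'.
rewrite sintZ -mul_polyC !polyCM.
have -> : (x1 + x2)%:P * sint n g1 * (x1%:P * b1%:P * Pi1) =
  (x1 + x2)%:P * (x1%:P * sint n g1 * (b1%:P * Pi1)) by ring.
by rewrite rel1'; ring.
Qed.

Lemma add_close T1 T2 x1 x2 : des T1 -> des T2 -> is_content x1 (lead_coef T1) ->
  is_content x2 (lead_coef T2) -> (size T1 <= size T2)%N -> Iset (x1 + x2).
Proof.
move=> D1 D2 c1 c2 le.
have [D1' c1' s1'] := des_iter hgamma delta_add delta_leib hL (size T2 - size T1) D1 c1.
apply: (add_same D1' D2 c1' c2); by rewrite s1' subnKC.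
Qed.
End Main3.

Unset Implicit Arguments. Set Strict Implicit.

Theorem mainTheorem14 (R : idomainType) (hPID : principal_ideal_ring R)
  (gamma tau : R) (hgamma : gamma \is a GRing.unit)
  (delta : {poly R} -> {poly R})
  (delta_add : forall p q, delta (p + q) = delta p + delta q)
  (delta_lin : forall (c : R) p, delta (c *: p) = c *: delta p)
  (delta_leib : forall p q, delta (p * q) = sigmaP gamma tau p * delta q + delta p * q)
  (delta_deg : (size (delta 'X) <= 2)%N)
  (L : {poly {poly R}}) (r : nat) (hr : (0 < r)%N) (hL : size L = r.+1) :
  is_ideal (fun c : R => c = 0 \/
    exists T, desingularized gamma tau delta L T /\ is_content c (lead_coef T)).
Proof.
split.
- by left.
- move=> a b [->|[T1 [D1 c1]]] Hb; first by rewrite add0r.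
  case: Hb => [->|[T2 [D2 c2]]]; first by rewrite addr0; right; exists T1.
  case: (leqP (size T1) (size T2)) => le.
  + exact: (add_close hPID hgamma delta_add delta_leib hL D1 D2 c1 c2 le).
  + by rewrite addrC; apply: (add_close hPID hgamma delta_add delta_leib hL D2 D1 c2 c1 (ltnW le)).
- move=> c a [->|[T [D ca]]]; first by left; rewrite mulr0.
  case: (eqVneq c 0) => [->|c0]; first by left; rewrite mul0r.
  have [D' c'] := des_scale c0 D ca.
  by right; exists (c%:P *: T).
Qed.
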